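(* For positive integers $M_1,N_1,M_2,N_2$, let $\mathcal{O}(M_1,N_1,M_2,N_2)$ denote the set of $(d_1,d_2)\in\mathbb{R}_+^2$ satisfying $$d_i\le\min(M_i,N_i),\ i=1,2,\qquad d_1+\frac{\min(N_1,N_2,M_2)}{\min(N_2,M_2)}\,d_2\le\min(M_1+M_2,N_1).$$ Then $\mathcal{O}(M_1,N_1,M_2,N_2)=\mathcal{O}\big(M_1,N_1,\min(M_2,N_2),\min(M_2,N_2)\big)$.
   Context: The set $\mathcal{O}(M_1,N_1,M_2,N_2)$ is the DoF outer region of a two-user MIMO Z interference channel without channel state information at the transmitters, with $M_i$ transmit and $N_i$ receive antennas at user $i$. *)

(* Defs.v *)
From Stdlib Require Import Reals Arith.
Open Scope R_scope.

Definition outer_region (M1 N1 M2 N2 : nat) : R * R -> Prop :=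
  fun d =>
    0 <= fst d /\ 0 <= snd d /\
    fst d <= INR (Nat.min M1 N1) /\
    snd d <= INR (Nat.min M2 N2) /\
    fst d + INR (Nat.min N1 (Nat.min N2 M2)) / INR (Nat.min N2 M2) * snd d
      <= INR (Nat.min (M1 + M2) N1).

(* Main.v *)
Require Import Defs.
From Stdlib Require Import Reals Arith Lia Lra FunctionalExtensionality PropExtensionality.
Open Scope R_scope.

Theorem lemma6 (M1 N1 M2 N2 : nat) :
  (0 < M1)%nat -> (0 < N1)%nat -> (0 < M2)%nat -> (0 < N2)%nat ->
  outer_region M1 N1 M2 N2 =
  outer_region M1 N1 (Nat.min M2 N2) (Nat.min M2 N2).
Proof.
  intros H1 H2 H3 H4.
  apply functional_extensionality; intros [d1 d2].
  apply propositional_extensionality.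
  unfold outer_region; simpl.
  set (k := Nat.min M2 N2).
  rewrite Nat.min_id.
  replace (Nat.min N2 M2) with k by (unfold k; lia).
  replace (Nat.min N1 (Nat.min N2 M2)) with (Nat.min N1 k) by (unfold k; lia).
  replace (Nat.min N1 (Nat.min k k)) with (Nat.min N1 k) by lia.
  assert (Hk : (0 < k)%nat) by (unfold k; lia).
  assert (Hkr : 0 < INR k) by (apply lt_0_INR; lia).
  assert (Hc0 : 0 <= INR (Nat.min N1 k) / INR k).
  { apply Rmult_le_pos; [apply pos_INR | left; apply Rinv_0_lt_compat; lra]. }
  assert (Hc1 : INR (Nat.min N1 k) / INR k <= 1).
  { apply (Rmult_le_reg_r (INR k)); [lra|]. unfold Rdiv.
    rewrite Rmult_assoc, Rinv_l by lra. rewrite Rmult_1_l, Rmult_1_r.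
    apply le_INR; lia. }
  set (c := INR (Nat.min N1 k) / INR k) in *.
  destruct (le_lt_dec N1 (M1 + k)) as [Hle|Hlt].
  - replace (Nat.min (M1 + M2) N1) with N1 by (unfold k in *; lia).
    replace (Nat.min (M1 + k) N1) with N1 by lia. tauto.
  - replace (Nat.min (M1 + k) N1) with (M1 + k)%nat by lia.
    replace (Nat.min M1 N1) with M1 by lia.
    assert (Hm : (M1 + k <= Nat.min (M1 + M2) N1)%nat) by (unfold k in *; lia).
    apply le_INR in Hm. rewrite plus_INR in Hm.
    rewrite plus_INR.
    all: try assumption. all: nra.
Qed.
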